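(* For every $n\geq1$, the number of $D_{2n}$-orbits of $\mathbf{X}_n$ whose elements have a stabilizer contained in the rotation subgroup $\langle\sigma\rangle=\{1,\sigma,\dots,\sigma^{n-1}\}$ equals $\sum_{d\mid n}\mathrm{orb}_1(d)$.
   Context: For an integer $n\geq1$ let $V_n=\{v_0,\dots,v_{n-1}\}$, indices modulo $n$. The dihedral group $D_{2n}=\{1,\sigma,\dots,\sigma^{n-1},\tau,\sigma\tau,\dots,\sigma^{n-1}\tau\}$ acts on subsets of $V_n$ elementwise, with $\sigma(v_i)=v_{i+1}$, $\tau(v_i)=v_{n-i}$. Let $\mathbf{X}_n$ be the family of subsets $X\subseteq V_n$ such that (a) there is no $i\in\mathbb{Z}_n$ with $v_i,v_{i+1}\in X$, and (b) for every $i\in\mathbb{Z}_n$ at least one of $v_i,v_{i+1},v_{i+2}$ lies in $X$ (for $n\geq3$ these are exactly the maximal independent sets of the cycle graph $C_n$ with edges $v_iv_{i+1}$). $\mathbf{X}_n$ is invariant under $D_{2n}$. For $X\in\mathbf{X}_n$, $\mathrm{Stab}(X)=\{g\in D_{2n}:g(X)=X\}$. For $d\mid 2n$, $\mathrm{orb}_d(n)$ denotes the number of $D_{2n}$-orbits of $\mathbf{X}_n$ of cardinality $2n/d$ (equivalently, whose elements have stabilizer of order $d$). *)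

(* Defs.v *)
From mathcomp Require Import all_boot.
Set Implicit Arguments. Unset Strict Implicit. Unset Printing Implicit Defensive.

(* Vertices v_0..v_{n-1} are the elements of 'I_n; index arithmetic mod n. *)
Lemma ord_pos n (i : 'I_n) : 0 < n.
Proof. exact: leq_ltn_trans (leq0n i) (ltn_ord i). Qed.

Definition addI n (i : 'I_n) (k : nat) : 'I_n :=
  Ordinal (ltn_pmod (i + k) (ord_pos i)).

Definition negI n (i : 'I_n) : 'I_n :=
  Ordinal (ltn_pmod (n - i) (ord_pos i)).

(* The dihedral group D_{2n}: the element (k, false) is sigma^k and
   (k, true) is sigma^k tau, for k : 'I_n (2n elements). *)
Definition dih n := ('I_n * bool)%type.

Definition actv n (g : dih n) (v : 'I_n) : 'I_n :=
  if g.2 then addI (negI v) g.1 else addI v g.1.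

Definition act n (g : dih n) (X : {set 'I_n}) : {set 'I_n} :=
  [set actv g v | v in X].

Definition rotsub n : {set dih n} := [set g : dih n | ~~ g.2].

Definition Xn n : {set {set 'I_n}} :=
  [set X : {set 'I_n} | [forall i : 'I_n,
      ~~ ((i \in X) && (addI i 1 \in X)) &&
      [|| i \in X, addI i 1 \in X | addI i 2 \in X]]].

Definition Stab n (X : {set 'I_n}) : {set dih n} :=
  [set g : dih n | act g X == X].

Definition dorbit n (X : {set 'I_n}) : {set {set 'I_n}} :=
  [set act g X | g : dih n].

Definition orbits n : {set {set {set 'I_n}}} := [set dorbit X | X in Xn n].

Definition orb (d n : nat) : nat :=
  #|[set O in orbits n | #|O| == (2 * n) %/ d]|.

(* Main.v *)
Require Import Defs.
From mathcomp Require Import all_boot all_algebra.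
From mathcomp Require Import ring zify.
Set Implicit Arguments. Unset Strict Implicit. Unset Printing Implicit Defensive.
Import GRing.Theory Num.Theory.

Section Aux.
Local Open Scope ring_scope.

Definition cg (d : int) (a b : int) := (d %| a - b)%Z.

Lemma cg_refl d a : cg d a a.
Proof. by rewrite /cg subrr dvdz0. Qed.

Lemma cg_sym d a b : cg d a b -> cg d b a.
Proof. rewrite /cg => h; have -> : b - a = - (a - b) by ring. by rewrite rpredN. Qed.

Lemma cg_trans d a b c : cg d a b -> cg d b c -> cg d a c.
Proof. rewrite /cg => h1 h2; have -> : a - c = (a - b) + (b - c) by ring. exact: rpredD. Qed.

Lemma cg_add d a b a' b' : cg d a b -> cg d a' b' -> cg d (a + a') (b + b').
Proof. rewrite /cg => h1 h2; have -> : a + a' - (b + b') = (a - b) + (a' - b') by ring. exact: rpredD. Qed.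

Lemma cg_mul d c a b : cg d a b -> cg d (c * a) (c * b).
Proof. rewrite /cg => h1; have -> : c * a - c * b = c * (a - b) by ring. exact: dvdz_mull. Qed.

Lemma cg_mod d a : cg d (a %% d)%Z a.
Proof.
rewrite /cg {2}(divz_eq a d).
have -> : (a %% d)%Z - ((a %/ d)%Z * d + (a %% d)%Z) = (- (a %/ d)%Z) * d by ring.
by apply: dvdz_mull; apply: dvdzz.
Qed.

Lemma cg_multiple d a : cg d (a * d) 0.
Proof. by rewrite /cg subr0; apply: dvdz_mull; apply: dvdzz. Qed.

Lemma cg_dvd d e a b : (e %| d)%Z -> cg d a b -> cg e a b.
Proof. move=> h1 h2; exact: dvdz_trans h1 h2. Qed.

Lemma cg_modE d a b : cg d a b -> (a %% d)%Z = (b %% d)%Z.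
Proof. by move=> h; apply/eqP; rewrite eqz_mod_dvd. Qed.

Lemma cg_small (d : nat) (a b : int) : 0 <= a < d%:Z -> 0 <= b < d%:Z -> cg d a b -> a = b.
Proof.
move=> ha hb h; rewrite -(modz_small ha) -(modz_small hb); exact: cg_modE.
Qed.

Definition sg (b : bool) : int := if b then -1 else 1.

Lemma sgK b : sg b * sg b = 1.
Proof. by case: b; rewrite /sg /=; ring. Qed.

Lemma ord_int n (v : 'I_n) : 0 <= (v : int) < n%:Z.
Proof. have := ltn_ord v; lia. Qed.

Lemma ord_eqz n (v w : 'I_n) : cg n v w -> v = w.
Proof. move=> h; apply: val_inj; apply/eqP; rewrite -eqz_nat; apply/eqP. exact: cg_small (ord_int v) (ord_int w) h. Qed.

End Aux.

Section Aux2.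
Local Open Scope ring_scope.

Lemma actvE n (g : dih n) (v : 'I_n) :
  (actv g v : int) = ((sg g.2 * v + g.1) %% n)%Z.
Proof.
case: g => k [] /=; rewrite /actv /addI /negI /= /sg.
- rewrite -modz_nat PoszD -modz_nat -subzn; last exact: ltnW (ltn_ord v).
  rewrite modzDml mulN1r.
  have -> : (n%:Z - v%:Z + k%:Z) = n%:Z + (- v%:Z + k%:Z) by ring.
  by rewrite modzDl.
- by rewrite -modz_nat PoszD mul1r.
Qed.

Lemma actv_cg n (g : dih n) (v : 'I_n) : cg n (actv g v) (sg g.2 * v + g.1).
Proof. rewrite actvE; exact: cg_mod. Qed.


Lemma exord n (hn : (0 < n)%N) (a : int) : exists v : 'I_n, cg n v a.
Proof.
have hlt : (`|(a %% n)%Z| < n)%N.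
  have h1 := @ltz_pmod a n ltac:(lia).
  have h2 := @modz_ge0 a n ltac:(lia). lia.
exists (Ordinal hlt) => /=.
rewrite gez0_abs; first exact: cg_mod.
apply: modz_ge0; lia.
Qed.

Lemma cg_sgmul n b (v w : int) c : cg n (sg b * v + c) (sg b * w + c) -> cg n v w.
Proof.
move=> h; have h2 : cg n (sg b * (sg b * v + c - c)) (sg b * (sg b * w + c - c)).
  apply: cg_mul; apply: cg_add => //; exact: cg_refl.
by move: h2; rewrite !addrK !mulrA sgK !mul1r.
Qed.

Lemma actv_inj n (g : dih n) : injective (actv g).
Proof.
move=> v w h; apply: ord_eqz; apply: (@cg_sgmul n g.2 _ _ g.1).
apply: cg_trans (cg_sym (actv_cg g v)) _; rewrite h; exact: actv_cg.
Qed.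

Lemma card_act n (g : dih n) (X : {set 'I_n}) : #|act g X| = #|X|.
Proof. rewrite /act card_imset //; exact: actv_inj. Qed.

Lemma act_fix n (h : dih n) (X : {set 'I_n}) : (forall v, v \in X -> actv h v \in X) -> act h X = X.
Proof.
move=> H; apply/eqP; rewrite eqEcard card_act leqnn andbT.
by apply/subsetP => x /imsetP [v vX ->]; apply: H.
Qed.

Lemma actv_surj n (g : dih n) x : exists v, actv g v = x.
Proof.
have [v hv] := exord (ord_pos x) (sg g.2 * ((x : int) - (g.1 : int))).
exists v; apply: ord_eqz; apply: cg_trans (actv_cg g v) _.
have h2 := cg_add (@cg_mul n (sg g.2) _ _ hv) (@cg_refl n g.1).
apply: cg_trans h2 _; rewrite mulrA sgK mul1r addrNK; exact: cg_refl.
Qed.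

End Aux2.

Definition Lift n d (Y : {set 'I_d}) : {set 'I_n} :=
  [set i : 'I_n | [exists j in Y, val j == i %% d]].
Arguments Lift : clear implicits.

Section Aux3.
Local Open Scope ring_scope.

Lemma memL n d (Y : {set 'I_d}) (i : 'I_n) (j : 'I_d) :
  cg d j i -> (i \in Lift n d Y) = (j \in Y).
Proof.
move=> h.
have hj : val j = (i %% d)%N.
  apply/eqP; rewrite -eqz_nat -modz_nat; apply/eqP.
  rewrite -(modz_small (ord_int j)); exact: cg_modE.
rewrite inE; apply/existsP/idP => [[j' /andP [j'Y /eqP e]]|jY].
  by have -> : j = j' by apply: val_inj; rewrite hj e.
by exists j; rewrite jY hj eqxx.
Qed.

Lemma cg_nd (n d : nat) a b : (d %| n)%N -> cg n a b -> cg d a b.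
Proof. by move=> h; apply: cg_dvd. Qed.

Lemma Lift_inj n d (Y Y' : {set 'I_d}) : (d <= n)%N ->
  Lift n d Y = Lift n d Y' -> Y = Y'.
Proof.
move=> hdn e; apply/setP => j.
have h : cg d j (widen_ord hdn j) by exact: cg_refl.
by rewrite -(memL Y h) -(memL Y' h) e.
Qed.

Lemma actL n d (Y : {set 'I_d}) (g : dih n) (h : dih d) :
  (d %| n)%N -> g.2 = h.2 -> cg d h.1 g.1 ->
  act g (Lift n d Y) = Lift n d (act h Y).
Proof.
move=> hdn e2 e1.
have dpos : (0 < d)%N by case: h {e2 e1} => k _; exact: ord_pos k.
apply/setP => x; apply/imsetP/idP.
- move=> [v vL ->].
  have [j hj] := exord dpos v.
  rewrite (memL Y hj) in vL.
  rewrite (memL _ (j := actv h j)); first exact: imset_f.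
  apply: cg_trans (actv_cg h j) _.
  apply: cg_trans _ (cg_sym (cg_nd hdn (actv_cg g v))).
  rewrite e2; apply: cg_add => //; exact: cg_mul.
- have [j' hj'] := exord dpos x.
  rewrite (memL _ hj') => /imsetP [j jY ej'].
  have [v ev] := actv_surj g x.
  exists v => //; rewrite (memL _ (j := j)) //.
  apply: (@cg_sgmul d h.2 _ _ h.1).
  apply: cg_trans (cg_sym (actv_cg h j)) _; rewrite -ej'.
  apply: cg_trans hj' _; rewrite -ev.
  apply: cg_trans (cg_nd hdn (actv_cg g v)) _.
  rewrite e2; apply: cg_add; [exact: cg_refl | exact: cg_sym].
Qed.


Lemma addI_cg n (i : 'I_n) k : cg n (addI i k) ((i : int) + (k : int)).
Proof. rewrite /addI /= -modz_nat PoszD; exact: cg_mod. Qed.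

Lemma memL_add n d (Y : {set 'I_d}) k (i : 'I_n) (j : 'I_d) : (d %| n)%N ->
  cg d j i -> (addI i k \in Lift n d Y) = (addI j k \in Y).
Proof.
move=> hdn h; apply: memL.
apply: cg_trans (addI_cg j k) _.
apply: cg_trans _ (cg_sym (cg_nd hdn (addI_cg i k))).
apply: cg_add => //; exact: cg_refl.
Qed.

Lemma XnL n d (Y : {set 'I_d}) : (0 < n)%N -> (d %| n)%N ->
  (Lift n d Y \in Xn n) = (Y \in Xn d).
Proof.
move=> npos hdn.
have dpos : (0 < d)%N by exact: dvdn_gt0 npos hdn.
have hle : (d <= n)%N by exact: dvdn_leq npos hdn.
rewrite !inE; apply/forallP/forallP => H x.
- have h : cg d x (widen_ord hle x) by exact: cg_refl.
  have := H (widen_ord hle x).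
  by rewrite (memL Y h) (memL_add Y 1 hdn h) (memL_add Y 2 hdn h).
- have [j h] := exord dpos x.
  have := H j.
  by rewrite (memL Y h) (memL_add Y 1 hdn h) (memL_add Y 2 hdn h).
Qed.

End Aux3.

Definition orbinj d (Y : {set 'I_d}) := forall h h' : dih d, act h Y = act h' Y -> h = h'.

Section Aux4.
Local Open Scope ring_scope.

Lemma card_dih d : #|{: dih d}| = (2 * d)%N.
Proof. by rewrite card_prod card_ord card_bool mulnC. Qed.

Lemma orbinj_card d (Y : {set 'I_d}) : #|dorbit Y| = (2 * d)%N -> orbinj Y.
Proof.
move=> e h h' ehh; rewrite /dorbit in e.
have : #|[set act g Y | g : dih d]| == #|{: dih d}| by rewrite e card_dih.
by move/imset_injP => /(_ h h' isT isT ehh).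
Qed.

Lemma card_orbinj d (Y : {set 'I_d}) : orbinj Y -> #|dorbit Y| = (2 * d)%N.
Proof.
move=> H; rewrite /dorbit -card_dih.
apply/eqP/imset_injP => h h' _ _; exact: H.
Qed.

Lemma act0 n (z : 'I_n) (X : {set 'I_n}) : cg n z 0 -> act (z, false) X = X.
Proof.
move=> hz; apply: act_fix => v vX.
suff -> : actv (z, false) v = v by [].
apply: ord_eqz; apply: cg_trans (actv_cg _ v) _ => /=.
rewrite /sg /= mul1r -[X in cg _ _ X]addr0; apply: cg_add => //; exact: cg_refl.
Qed.

Lemma StabL n d (Y : {set 'I_d}) : (0 < n)%N -> (d %| n)%N -> orbinj Y ->
  Stab (Lift n d Y) \subset rotsub n.
Proof.
move=> npos hdn H.
have dpos : (0 < d)%N by exact: dvdn_gt0 npos hdn.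
have hle : (d <= n)%N by exact: dvdn_leq npos hdn.
apply/subsetP => g; rewrite !inE => /eqP e.
have [r hr] := exord dpos g.1.
have [z hz] := exord dpos 0.
rewrite (actL Y (h := (r, g.2))) // in e.
have e2 := Lift_inj hle e.
have e3 : act (r, g.2) Y = act (z, false) Y by rewrite e2 act0.
by have [_ ->] := H _ _ e3.
Qed.

Lemma dorbitL n d (Y : {set 'I_d}) : (0 < n)%N -> (d %| n)%N ->
  dorbit (Lift n d Y) = [set Lift n d W | W in dorbit Y].
Proof.
move=> npos hdn.
have dpos : (0 < d)%N by exact: dvdn_gt0 npos hdn.
have hle : (d <= n)%N by exact: dvdn_leq npos hdn.
apply/setP => O; apply/imsetP/imsetP.
- move=> [g _ ->].
  have [r hr] := exord dpos g.1.
  exists (act (r, g.2) Y); first exact: imset_f.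
  exact: actL.
- move=> [W /imsetP [h _ ->] ->].
  exists (widen_ord hle h.1, h.2) => //.
  by rewrite (actL Y (h := h)) //=; exact: cg_refl.
Qed.

Lemma Lift_rot n d (W : {set 'I_d}) (k : 'I_n) : (d %| n)%N -> cg d k 0 ->
  act (k, false) (Lift n d W) = Lift n d W.
Proof.
move=> hdn hk.
have dpos : (0 < d)%N by case: (posnP d) hdn => // -> ; rewrite dvd0n => /eqP e; move: (ord_pos k); rewrite e.
have [z hz] := exord dpos 0.
rewrite (actL W (h := (z, false))) //; last exact: cg_trans hz (cg_sym hk).
by rewrite act0.
Qed.

Lemma Lift_rot_dvd n d (Y : {set 'I_d}) (k : 'I_n) : (0 < n)%N -> (d %| n)%N -> orbinj Y ->
  act (k, false) (Lift n d Y) = Lift n d Y -> cg d k 0.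
Proof.
move=> npos hdn H e.
have dpos : (0 < d)%N by exact: dvdn_gt0 npos hdn.
have hle : (d <= n)%N by exact: dvdn_leq npos hdn.
have [r hr] := exord dpos k.
have [z hz] := exord dpos 0.
rewrite (actL Y (h := (r, false))) // in e.
have e2 := Lift_inj hle e.
have e3 : act (r, false) Y = act (z, false) Y by rewrite e2 act0.
have [ez] := H _ _ e3.
by apply: cg_trans (cg_sym hr) _; rewrite ez.
Qed.

End Aux4.

Section Aux5.
Local Open Scope ring_scope.

Definition FR n (X : {set 'I_n}) (a : int) :=
  forall v w : 'I_n, cg n w ((v : int) + a) -> v \in X -> w \in X.

Lemma FR_cg n (X : {set 'I_n}) a b : cg n a b -> FR X a -> FR X b.
Proof.
move=> hab H v w hw; apply: H; apply: cg_trans hw _.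
apply: cg_add; [exact: cg_refl | exact: cg_sym].
Qed.

Lemma FR_0 n (X : {set 'I_n}) : FR X 0.
Proof. by move=> v w; rewrite addr0 => /ord_eqz ->. Qed.

Lemma FR_add n (X : {set 'I_n}) a b : FR X a -> FR X b -> FR X (a + b).
Proof.
move=> Ha Hb v w hw vX.
have [u hu] := exord (ord_pos v) ((v : int) + a).
apply: (Hb u) (Ha v u hu vX).
apply: cg_trans hw _; rewrite addrA; apply: cg_add; [exact: cg_sym | exact: cg_refl].
Qed.

Lemma FR_act n (X : {set 'I_n}) a (k : 'I_n) : cg n k a ->
  FR X a <-> act (k, false) X = X.
Proof.
move=> hk; split.
- move=> H; apply: act_fix => v vX; apply: (H v) => //.
  apply: cg_trans (actv_cg _ v) _; rewrite /sg /= mul1r.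
  apply: cg_add => //; exact: cg_refl.
- move=> e v w hw vX; rewrite -e; apply/imsetP; exists v => //.
  apply: ord_eqz; apply: cg_trans hw _; apply: cg_sym.
  apply: cg_trans (actv_cg _ v) _; rewrite /sg /= mul1r.
  apply: cg_add => //; exact: cg_refl.
Qed.

Lemma FR_neg n (X : {set 'I_n}) a : FR X a -> FR X (- a).
Proof.
move=> H v w hw vX.
have [k hk] := exord (ord_pos v) a.
have e := (FR_act X hk).1 H.
move: vX; rewrite -{1}e => /imsetP [u uX eu].
suff -> : w = u by [].
apply: ord_eqz; apply: cg_trans hw _.
have h1 := actv_cg (k, false) u; rewrite -eu /sg /= mul1r in h1.
have h2 := cg_add h1 (@cg_refl n (- a)).
apply: cg_trans h2 _.
rewrite -addrA; apply: (@cg_trans n _ ((u : int) + 0)).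
  apply: cg_add; first exact: cg_refl.
  have -> : (k : int) + - a = (k : int) - a by [].
  rewrite /cg subr0; exact: hk.
by rewrite addr0; exact: cg_refl.
Qed.

Lemma FR_muln n (X : {set 'I_n}) a (m : nat) : FR X a -> FR X (a * m%:Z).
Proof.
move=> H; elim: m => [|m IH]; first by rewrite mulr0; exact: FR_0.
have -> : a * (m.+1)%:Z = a * m%:Z + a by rewrite -addn1 PoszD mulrDr mulr1.
exact: FR_add.
Qed.

Lemma FR_mulz n (X : {set 'I_n}) a (m : int) : FR X a -> FR X (a * m).
Proof.
move=> H; case: m => m; first exact: FR_muln.
rewrite NegzE mulrN; apply: FR_neg; exact: FR_muln.
Qed.

Lemma FR_n n (X : {set 'I_n}) : FR X n.
Proof. apply: FR_cg (@FR_0 n X); by rewrite /cg sub0r rpredN dvdzz. Qed.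

Definition FRb n (X : {set 'I_n}) (k : nat) :=
  [forall v : 'I_n, [forall w : 'I_n,
     ((w : int) == (((v : int) + k%:Z) %% n)%Z) ==> (v \in X) ==> (w \in X)]].

Lemma FRbP n (X : {set 'I_n}) k : FRb X k <-> FR X k.
Proof.
split.
- move=> /forallP H v w hw vX; have /forallP/(_ w)/implyP h := H v.
  suff /implyP : (v \in X) ==> (w \in X) by apply.
  apply: h; apply/eqP; rewrite -(modz_small (ord_int w)); exact: cg_modE.
- move=> H; apply/forallP => v; apply/forallP => w; apply/implyP => /eqP e.
  apply/implyP; apply: H; rewrite e; exact: cg_mod.
Qed.

End Aux5.

Section Aux6.
Local Open Scope ring_scope.

Lemma period n (X : {set 'I_n}) : (0 < n)%N ->
  exists p : nat, [/\ (0 < p)%N, (p %| n)%N, FR X p & forall a, FR X a -> (p %| a)%Z].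
Proof.
move=> npos.
have ex : exists k, (0 < k)%N && FRb X k.
  by exists n; rewrite npos; apply/FRbP; exact: FR_n.
case: (ex_minnP ex) => p /andP [ppos /FRbP Hp] pmin.
have Hdvd : forall a, FR X a -> (p %| a)%Z.
  move=> a Ha.
  have E : a + p%:Z * (- (a %/ p)%Z) = (a %% p)%Z.
    by rewrite {1}(divz_eq a p); ring.
  have Hr : FR X (a %% p)%Z.
    by rewrite -E; apply: FR_add Ha _; exact: FR_mulz.
  have r0 := @modz_ge0 a p ltac:(lia).
  have r1 := @ltz_pmod a p ltac:(lia).
  apply/dvdz_mod0P; apply/eqP; apply: contraT => rn0.
  have rpos : (0 < `|(a %% p)%Z|)%N by lia.
  have : (0 < `|(a %% p)%Z|)%N && FRb X `|(a %% p)%Z|.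
    by rewrite rpos /=; apply/FRbP; rewrite gez0_abs.
  move/pmin; lia.
exists p; split => //.
have := Hdvd _ (@FR_n n X); by rewrite dvdzE.
Qed.


Lemma FR_mem n (X : {set 'I_n}) (p : nat) (v w : 'I_n) : FR X p -> cg p v w ->
  (v \in X) = (w \in X).
Proof.
move=> Hp.
suff H : forall v w : 'I_n, cg p v w -> v \in X -> w \in X.
  by move=> h; apply/idP/idP; apply: H => //; exact: cg_sym.
move=> {}v {}w /cg_sym /dvdzP [q eq] vX.
apply: (@FR_mulz n X _ q Hp v w) vX.
have -> : (v : int) + p%:Z * q = w by rewrite mulrC -eq; ring.
exact: cg_refl.
Qed.

Lemma restrict n (X : {set 'I_n}) (p : nat) : (0 < n)%N -> (p %| n)%N -> FR X p ->
  exists Y : {set 'I_p}, Lift n p Y = X.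
Proof.
move=> npos hdn Hp.
have ppos : (0 < p)%N by exact: dvdn_gt0 npos hdn.
have hle : (p <= n)%N by exact: dvdn_leq npos hdn.
exists [set j : 'I_p | widen_ord hle j \in X]; apply/setP => i.
have [j hj] := exord ppos i.
rewrite (memL _ hj) inE; apply: FR_mem Hp _; exact: hj.
Qed.

Lemma sg_xor a b : sg (a (+) b) = sg a * sg b.
Proof. by case: a; case: b; rewrite /sg /=; ring. Qed.

Lemma act_eq_fix n (X : {set 'I_n}) (g g' : dih n) : act g X = act g' X ->
  exists k : 'I_n, act (k, g.2 (+) g'.2) X = X /\ cg n k (sg g.2 * ((g'.1 : int) - (g.1 : int))).
Proof.
move=> e.
have npos := ord_pos g.1.
have [k hk] := exord npos (sg g.2 * ((g'.1 : int) - (g.1 : int))).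
exists k; split => //.
apply: act_fix => v vX.
have : actv g' v \in act g X by rewrite e; exact: imset_f.
move=> /imsetP [w wX ew].
suff -> : actv (k, g.2 (+) g'.2) v = w by [].
apply: ord_eqz; apply: cg_trans (actv_cg _ v) _ => /=.
have h1 : cg n (sg g.2 * (actv g w : int) - sg g.2 * (g.1 : int)) (sg g.2 * (actv g' v : int) - sg g.2 * (g.1 : int)).
  by rewrite ew; exact: cg_refl.
have h2 : cg n (sg g.2 * (actv g w : int) - sg g.2 * (g.1 : int)) w.
  have := cg_add (@cg_mul n (sg g.2) _ _ (actv_cg g w)) (@cg_refl n (- (sg g.2 * (g.1 : int)))).
  by rewrite mulrDr mulrA sgK mul1r addrK.
have h3 : cg n (sg g.2 * (actv g' v : int) - sg g.2 * (g.1 : int)) (sg g.2 * (sg g'.2 * (v : int) + (g'.1 : int)) - sg g.2 * (g.1 : int)).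
  apply: cg_add; last exact: cg_refl.
  exact: cg_mul (actv_cg g' v).
apply: cg_sym; apply: cg_trans (cg_sym h2) _; apply: cg_trans h1 _; apply: cg_trans h3 _.
rewrite sg_xor.
have -> : sg g.2 * (sg g'.2 * (v : int) + (g'.1 : int)) - sg g.2 * (g.1 : int)
          = sg g.2 * sg g'.2 * (v : int) + sg g.2 * ((g'.1 : int) - (g.1 : int)) by ring.
apply: cg_add; [exact: cg_refl | exact: cg_sym].
Qed.

End Aux6.

Section Aux7.
Local Open Scope ring_scope.

Lemma orbinj_restr n (X : {set 'I_n}) (p : nat) (Y : {set 'I_p}) :
  (0 < n)%N -> (p %| n)%N -> Stab X \subset rotsub n ->
  (forall a, FR X a -> (p %| a)%Z) -> Lift n p Y = X -> orbinj Y.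
Proof.
move=> npos hdn hS Hd eL h h' ehh.
have hle : (p <= n)%N by exact: dvdn_leq npos hdn.
pose g : dih n := (widen_ord hle h.1, h.2).
pose g' : dih n := (widen_ord hle h'.1, h'.2).
have e : act g X = act g' X.
  rewrite -eL (actL Y (h := h)) //; last exact: cg_refl.
  by rewrite (actL Y (h := h')) //; [rewrite ehh | exact: cg_refl].
have [k [ek hk]] := act_eq_fix e.
have : (k, g.2 (+) g'.2) \in Stab X by rewrite inE ek.
move/(subsetP hS); rewrite inE /= => hx.
have e2 : h.2 = h'.2 by move: hx; case: (h.2); case: (h'.2).
rewrite /= -e2 addbb in ek.
have Fk : FR X k by apply/(FR_act X (cg_refl n k)).
have F1 := FR_cg hk Fk.
have F2 := @FR_mulz n X _ (sg g.2) F1.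
rewrite mulrC mulrA sgK mul1r in F2.
have /Hd hp := F2.
have e1 : h'.1 = h.1.
  apply: ord_eqz; exact: hp.
by case: h h' ehh e2 e1 {g g' e ek hx hk F1 F2 hp} => [a b] [a' b'] /= _ -> ->.
Qed.

End Aux7.

Lemma mem_bigcup_nat (T : finType) (F : nat -> {set T}) (s : seq nat) x :
  reflect (exists2 d, d \in s & x \in F d) (x \in \bigcup_(d <- s) F d).
Proof.
elim: s => [|a s IH]; first by rewrite big_nil inE; constructor => [[d]].
rewrite big_cons in_setU; apply: (iffP orP).
- case=> [xa|/IH [d ds xd]]; first by exists a; rewrite ?mem_head.
  by exists d; rewrite // in_cons ds orbT.
- move=> [d]; rewrite in_cons => /orP [/eqP ->|ds] xd; first by left.
  by right; apply/IH; exists d.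
Qed.

Lemma card_bigcup_nat (T : finType) (F : nat -> {set T}) (s : seq nat) :
  uniq s -> (forall d e x, d \in s -> e \in s -> x \in F d -> x \in F e -> d = e) ->
  #|\bigcup_(d <- s) F d| = \sum_(d <- s) #|F d|.
Proof.
elim: s => [|a s IH] /=; first by rewrite !big_nil cards0.
move=> /andP [aS us] H.
rewrite !big_cons cardsU IH //; last first.
  by move=> d e x ds es; apply: H; rewrite in_cons ?ds ?es orbT.
suff -> : F a :&: \bigcup_(d <- s) F d = set0 by rewrite cards0 subn0.
apply/setP => x; rewrite !inE; apply/negP => /andP [xa /mem_bigcup_nat [d ds xd]].
have ead : a = d by apply: (H a d x) => //; rewrite in_cons ?eqxx ?ds ?orbT.
by move: aS; rewrite ead ds.
Qed.


Definition Bset d : {set {set {set 'I_d}}} := [set O in orbits d | #|O| == (2 * d) %/ 1].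
Definition Tset n d : {set {set {set 'I_n}}} := (fun O : {set {set 'I_d}} => [set Lift n d W | W in O]) @: Bset d.

Lemma Bset_orbinj d (O : {set {set 'I_d}}) : O \in Bset d -> exists2 Y, Y \in Xn d /\ orbinj Y & O = dorbit Y.
Proof.
rewrite inE => /andP [/imsetP [Y YX ->]]; rewrite divn1 => /eqP c.
exists Y => //; split => //; exact: orbinj_card.
Qed.

Lemma self_dorbit d (Y : {set 'I_d}) : (0 < d)%N -> Y \in dorbit Y.
Proof.
move=> dpos; have [z hz] := exord dpos 0%R.
apply/imsetP; exists (z, false) => //; by rewrite act0.
Qed.

Lemma Tset_dvd n d e (x : {set {set 'I_n}}) : (0 < n)%N -> (d %| n)%N -> (e %| n)%N ->
  x \in Tset n d -> x \in Tset n e -> (d %| e)%N.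
Proof.
move=> npos hdn hen /imsetP [O OB ->] /imsetP [O' OB' ex].
have dpos : (0 < d)%N by exact: dvdn_gt0 npos hdn.
have [Y [_ HY] eO] := Bset_orbinj OB.
have [Z _ eO'] := Bset_orbinj OB'.
have : Lift n d Y \in [set Lift n e W | W in O'].
  by rewrite -ex; apply: imset_f; rewrite eO; exact: self_dorbit.
move=> /imsetP [W _ eW].
have [k hk] := exord npos (e : int).
have hk0 : cg e k 0%R.
  apply: cg_trans (cg_nd hen hk) _; rewrite /cg GRing.subr0; exact: dvdzz.
have := Lift_rot W hen hk0; rewrite -eW => /(Lift_rot_dvd npos hdn HY) hd.
have : cg d (e : int) 0%R by apply: cg_trans (cg_sym (cg_nd hdn hk)) hd.
by rewrite /cg GRing.subr0 dvdzE.
Qed.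

Lemma card_Tset n d : (0 < n)%N -> (d %| n)%N -> #|Tset n d| = #|Bset d|.
Proof.
move=> npos hdn; have hle : (d <= n)%N by exact: dvdn_leq npos hdn.
rewrite /Tset card_imset //; apply: imset_inj => Y Y'; exact: Lift_inj hle.
Qed.

Theorem proposition2p3 (n : nat) (hn : 1 <= n) :
  #|[set dorbit X | X in [set X in Xn n | Stab X \subset rotsub n]]|
  = \sum_(d <- divisors n) orb 1 d.
Proof.
have npos : (0 < n)%N by [].
have eqA : [set dorbit X | X in [set X in Xn n | Stab X \subset rotsub n]]
           = \bigcup_(d <- divisors n) Tset n d.
  apply/setP => x; apply/imsetP/mem_bigcup_nat.
  - move=> [X]; rewrite inE => /andP [XX XS] ->.
    have [p [ppos pn Fp Hp]] := period X npos.
    have [Y eL] := restrict npos pn Fp.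
    have HY := orbinj_restr npos pn XS Hp eL.
    exists p; first by rewrite -dvdn_divisors.
    apply/imsetP; exists (dorbit Y).
      rewrite inE divn1 card_orbinj // eqxx andbT.
      by apply: imset_f; rewrite -(XnL Y npos pn) eL.
    by rewrite -eL dorbitL.
  - move=> [d dd /imsetP [O OB ->]].
    have hdn : (d %| n)%N by rewrite dvdn_divisors.
    have [Y [YX HY] ->] := Bset_orbinj OB.
    exists (Lift n d Y); last by rewrite dorbitL.
    by rewrite inE XnL // YX StabL.
rewrite eqA card_bigcup_nat; first last.
- move=> d e x dd ed xd xe.
  have hdn : (d %| n)%N by rewrite dvdn_divisors.
  have hen : (e %| n)%N by rewrite dvdn_divisors.
  by apply/eqP; rewrite eqn_dvd (Tset_dvd npos hdn hen xd xe) (Tset_dvd npos hen hdn xe xd).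
- exact: divisors_uniq.
apply: eq_big_seq => d dd; rewrite card_Tset //; by rewrite dvdn_divisors.
Qed.
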